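(* Let $n\geq1$, $\eta=(z,d_0,d_1,\ldots,d_r)\in\Omega$ and $1\leq l<j\leq n$. (a) If $v_{l,\eta}=(p_l,0)$ and $v_{j,\eta}=(p_j,0)$, then $\pi_1(v_{j,\eta}+(n-j)(1,1))\leq\pi_1(v_{l,\eta}+(n-l)(1,1))$, with equality if and only if there exists $1\leq t\leq r$ with $\sum_{i=0}^{t-1}d_i<l<j\leq\sum_{i=0}^td_i$. (b) If $v_{l,\eta}=(0,p_l)$ and $v_{j,\eta}=(0,p_j)$, then $\pi_2(v_{j,\eta}+(n-j)(1,1))\leq\pi_2(v_{l,\eta}+(n-l)(1,1))$, with equality if and only if there exists $1\leq t\leq r$ with $\sum_{i=0}^{t-1}d_i<l<j\leq\sum_{i=0}^td_i$.
   Context: $\pi_i$ is the $i$-th coordinate. $\Omega$ is the set of $\eta=(z,d_0,\ldots,d_r)$ with $z\in\{0,1\}$, $d_0=0$, $d_i\geq1$ ($1\leq i\leq r$), $\sum_{i=0}^rd_i=n$. For $j\in\{1,\ldots,n\}$, $t\in\{1,\ldots,r\}$ is unique with $\sum_{i=0}^{t-1}d_i<j\leq\sum_{i=0}^td_i$, $c=j-\sum_{i=0}^{t-1}d_i$; $v_{j,\eta}=(\sum_{i\text{ odd},i<t}d_i+c,0)$ if $z=1,t$ odd; $(0,\sum_{i\text{ even},i<t}d_i+c)$ if $z=1,t$ even; $(0,\sum_{i\text{ odd},i<t}d_i+c)$ if $z=0,t$ odd; $(\sum_{i\text{ even},i<t}d_i+c,0)$ if $z=0,t$ even. *)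

(* Defs.v *)
From mathcomp Require Import all_boot.
Set Implicit Arguments. Unset Strict Implicit. Unset Printing Implicit Defensive.

(* eta = (z, d_0, ..., d_r) is represented by z : nat and the sequence
   d = [:: d_0; d_1; ...; d_r] (so r = (size d).-1 and d_i = nth 0 d i). *)

Definition dd (d : seq nat) (i : nat) : nat := nth 0 d i.

Definition rr (d : seq nat) : nat := (size d).-1.

Definition psum (d : seq nat) (t : nat) : nat := \sum_(0 <= i < t.+1) dd d i.

Definition inOmega (n : nat) (z : nat) (d : seq nat) : Prop :=
  [/\ z = 0 \/ z = 1,
      0 < size d,
      dd d 0 = 0,
      (forall i, 1 <= i <= rr d -> 1 <= dd d i)
    & \sum_(0 <= i < (rr d).+1) dd d i = n].

(* The block index t of j: the least t with j <= \sum_{i=0}^t d_i.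
   For eta in Omega and 1 <= j <= n this is the unique t in {1,...,r}
   with \sum_{i=0}^{t-1} d_i < j <= \sum_{i=0}^t d_i. *)
Definition blk (d : seq nat) (j : nat) : nat :=
  find (fun t => j <= psum d t) (iota 0 (size d)).

Definition vv (z : nat) (d : seq nat) (j : nat) : nat * nat :=
  let t := blk d j in
  let c := j - \sum_(0 <= i < t) dd d i in
  let so := \sum_(0 <= i < t | odd i) dd d i in
  let se := \sum_(0 <= i < t | ~~ odd i) dd d i in
  if z == 1 then
    (if odd t then (so + c, 0) else (0, se + c))
  else
    (if odd t then (0, so + c) else (se + c, 0)).

Definition vadd (u w : nat * nat) : nat * nat := (u.1 + w.1, u.2 + w.2).
Definition pi1 (u : nat * nat) : nat := u.1.
Definition pi2 (u : nat * nat) : nat := u.2.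

(* Main.v *)
Require Import Defs.
From mathcomp Require Import all_boot zify.

Section S.
Variable d : seq nat.
Notation S t := (\sum_(0 <= i < t) dd d i).

Lemma S_mono a b : a <= b -> S a <= S b.
Proof. move=> ab; rewrite (@big_cat_nat _ _ _ a 0 b) //=; lia. Qed.

Lemma S_split t q : S t = \sum_(0 <= i < t | odd i == q) dd d i + \sum_(0 <= i < t | odd i != q) dd d i.
Proof. by rewrite (bigID (fun i => odd i == q)) /=. Qed.

Lemma blk_spec n j : inOmega n 0 d \/ True -> 0 < size d -> dd d 0 = 0 ->
  \sum_(0 <= i < (rr d).+1) dd d i = n -> 1 <= j <= n ->
  [/\ 1 <= blk d j <= rr d, S (blk d j) < j & j <= S (blk d j).+1].
Proof.
move=> _ sz d0 sn /andP[j1 jn].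
have Hr : rr d < size d by rewrite /rr; lia.
have Hhas : has (fun t => j <= psum d t) (iota 0 (size d)).
  apply/hasP; exists (rr d); first by rewrite mem_iota; lia.
  by rewrite /psum sn.
have Hlt : blk d j < size d by rewrite /blk -{2}(size_iota 0 (size d)) -has_find.
have := nth_find 0 Hhas; rewrite -/(blk d j) nth_iota // add0n /psum => Hj.
have Hb : 1 <= blk d j.
  case E: (blk d j) => [|k] //; move: Hj; rewrite E big_nat1 d0; lia.
have := @before_find _ 0 (fun t => j <= psum d t) (iota 0 (size d)) (blk d j).-1.
rewrite -/(blk d j) prednK ?ltnSn // => /(_ (leqnn _)).
rewrite nth_iota; last by lia.
rewrite add0n /psum prednK // => /negbT; rewrite -ltnNge => HS.
split => //; rewrite Hb /=; rewrite /rr; lia.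
Qed.
End S.

Local Notation SS d t := (\sum_(0 <= i < t) dd d i).
Lemma sum_odd_eq d t : odd t -> \sum_(0 <= i < t | odd i) dd d i = \sum_(0<=i<t | odd i == odd t) dd d i.
Proof. by move=> ->; apply: eq_bigl => i; case: (odd i). Qed.
Lemma sum_even_eq d t : ~~ odd t -> \sum_(0 <= i < t | ~~ odd i) dd d i = \sum_(0<=i<t | odd i == odd t) dd d i.
Proof. by move/negbTE=> ->; apply: eq_bigl => i; case: (odd i). Qed.

Lemma B_mono d tl tj : tl <= tj -> odd tl = odd tj -> tj <= rr d ->
  (forall i, 1 <= i <= rr d -> 1 <= dd d i) ->
  \sum_(0 <= i < tl | odd i != odd tl) dd d i <= \sum_(0 <= i < tj | odd i != odd tj) dd d i /\
  (tl < tj -> \sum_(0 <= i < tl | odd i != odd tl) dd d i < \sum_(0 <= i < tj | odd i != odd tj) dd d i).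
Proof.
move=> le E tr dpos; rewrite -E (@big_cat_nat _ _ _ tl 0 tj) //=.
split; first lia.
move=> lt.
have lt2 : tl.+1 < tj.
  rewrite ltn_neqAle lt andbT; apply/eqP => H; move: E; rewrite -H /=; by case: (odd tl).
rewrite [X in _ < _ + X]big_mkcond big_ltn // big_ltn //.
have h : 1 <= dd d tl.+1 by apply: dpos; lia.
move: (dd d tl.+1) h => x h.
rewrite oddS eqxx (_ : (~~ odd tl != odd tl) = true); last by case: (odd tl).
rewrite /=; lia.
Qed.

Theorem lemma2p8 (n : nat) (z : nat) (d : seq nat) (l j : nat) :
  1 <= n -> inOmega n z d -> 1 <= l -> l < j -> j <= n ->
  (forall pl pj : nat, vv z d l = (pl, 0) -> vv z d j = (pj, 0) ->
     pi1 (vadd (vv z d j) (n - j, n - j)) <= pi1 (vadd (vv z d l) (n - l, n - l))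
     /\ (pi1 (vadd (vv z d j) (n - j, n - j)) = pi1 (vadd (vv z d l) (n - l, n - l))
         <-> exists t, [/\ 1 <= t <= rr d,
                          \sum_(0 <= i < t) dd d i < l & j <= \sum_(0 <= i < t.+1) dd d i]))
  /\
  (forall pl pj : nat, vv z d l = (0, pl) -> vv z d j = (0, pj) ->
     pi2 (vadd (vv z d j) (n - j, n - j)) <= pi2 (vadd (vv z d l) (n - l, n - l))
     /\ (pi2 (vadd (vv z d j) (n - j, n - j)) = pi2 (vadd (vv z d l) (n - l, n - l))
         <-> exists t, [/\ 1 <= t <= rr d,
                          \sum_(0 <= i < t) dd d i < l & j <= \sum_(0 <= i < t.+1) dd d i])).
Proof.
move=> n1 [zz sz d0 dpos sn] l1 lj jn.
have [/andP[tl1 tlr] Sl lS] := @blk_spec d n l (or_intror I) sz d0 sn ltac:(lia).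
have [/andP[tj1 tjr] Sj jS] := @blk_spec d n j (or_intror I) sz d0 sn ltac:(lia).
have uniq x t : 1 <= t <= rr d -> SS d t < x -> x <= SS d t.+1 -> 
   SS d (blk d x) < x -> x <= SS d (blk d x).+1 -> t = blk d x.
  move=> _ h1 h2 h3 h4; apply/eqP; rewrite eqn_leq; apply/andP; split.
    rewrite leqNgt; apply/negP => lt.
    have := @S_mono d _ _ lt; lia.
  rewrite leqNgt; apply/negP => lt.
  have := @S_mono d _ _ lt; lia.
have tle : blk d l <= blk d j.
  rewrite leqNgt; apply/negP => lt; have := @S_mono d _ _ lt; lia.
have Hex : (exists t, [/\ 1 <= t <= rr d,
              \sum_(0 <= i < t) dd d i < l & j <= \sum_(0 <= i < t.+1) dd d i]) <->
           blk d l = blk d j.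
  split.
    move=> [t [tr h1 h2]].
    have h3 : SS d t < j by lia.
    have h4 : l <= SS d t.+1 by lia.
    by rewrite -(uniq l t) // -(uniq j t).
  move=> E; exists (blk d l); split => //; first by rewrite tl1.
  by rewrite E.
have Key := @B_mono d (blk d l) (blk d j) tle.
have Spl := S_split d (blk d l) (odd (blk d l)).
have Spj := S_split d (blk d j) (odd (blk d j)).
rewrite /vv; move: Hex Key Spl Spj Sl lS Sj jS tle tjr.
set tl := blk d l; set tj := blk d j.
move=> Hex Key Spl Spj Sl lS Sj jS tle tjr.
clearbody tl tj.
have cl : 0 < l - SS d tl by lia.
have cj : 0 < j - SS d tj by lia.
case: zz => -> /=; case Ol: (odd tl); case Oj: (odd tj) => /=;
  split => pl pj E1 E2; move: (congr1 fst E1) (congr1 snd E1) (congr1 fst E2) (congr1 snd E2) => /= H1 H2 H3 H4; try lia;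
  (try rewrite (sum_odd_eq _ _ Ol)); (try rewrite (sum_even_eq _ _ (negbT Ol)));
  (try rewrite (sum_odd_eq _ _ Oj)); (try rewrite (sum_even_eq _ _ (negbT Oj)));
  (have := Key ltac:(by rewrite Ol Oj) tjr dpos => -[K1 K2]);
  rewrite Hex.
all: move: Sl Sj Spl Spj K1 K2.
all: set S := SS d tl; set A := \sum_(0<=i<tl | odd i == odd tl) dd d i;
  set B := \sum_(0<=i<tl | odd i != odd tl) dd d i.
all: set S' := SS d tj; set A' := \sum_(0<=i<tj | odd i == odd tj) dd d i;
  set B' := \sum_(0<=i<tj | odd i != odd tj) dd d i => Sl Sj Spl Spj K1 K2.
all: have EE : tl = tj -> [/\ S = S', A = A' & B = B'] by move=> e; rewrite /S /S' /A /A' /B /B' e.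
all: have [E|lt] : tl = tj \/ tl < tj by lia.
all: clearbody S A B S' A' B'.
all: first [ (have [? ? ?] := EE E; split; [lia | split => _; lia]) | (have K3 := K2 lt; split; [lia | split => h; lia]) ].
Qed.
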